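(* Let $a$ be a (strong) composition with $\ell(a)\le n$. Then $$G^{(\beta)}_a(x_1,\dots,x_n)=\sum_b\beta^{\mathrm{ex}(b)}F_{\mathtt{flat}(b)}(x_1,\dots,x_n),$$ where the sum is over all unsplit glides $b$ of $0^{n-\ell(a)}a$. In particular $G^{(\beta)}_a$ is quasisymmetric.
   Context: A (strong) composition has all entries positive; $\ell(a)$ is its number of entries; $0^m a$ is $a$ with $m$ zeros prepended. Glides: a weak komposition is a weak composition whose positive entries are colored black or red, $\mathrm{ex}(b)$ = number of red entries; for a weak composition or komposition, $\mathtt{flat}$ is the sequence of its nonzero entries (colors forgotten). For a weak composition $a'$ of length $n$ with nonzero entries exactly at positions $n_1<\dots<n_\ell$, a weak komposition $b$ of length $n$ is a glide of $a'$ if there exist $0=i_0<\dots<i_\ell$ with $i_j\le n_j$, $b_k=0$ for $k>i_\ell$, and for each $j$: $b_{i_{j-1}+1}+\dots+b_{i_j}=\mathtt{flat}(a')_j+\#\{\text{red entries among } b_{i_{j-1}+1},\dots,b_{i_j}\}$ and the first nonzero entry among them is black. $\mathcal{G}^{(\beta)}_{a'}(x_1,\dots,x_n)=\sum_b\beta^{\mathrm{ex}(b)}x^b$ over glides $b$ of $a'$. The quasisymmetric glide is $G^{(\beta)}_a(x_1,\dots,x_n)=\mathcal{G}^{(\beta)}_{0^{n-\ell(a)}a}$ if $\ell(a)\le n$ and $0$ otherwise. A glide $b$ of $a'$ is unsplit if $b$ has exactly as many nonzero black entries as $a'$ has nonzero entries, and no zero entry of $b$ lies to the right of a nonzero entry.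 The fundamental quasisymmetric polynomial is $F_\alpha(x_1,\dots,x_n)=\sum x^c$ over weak compositions $c$ of length $n$ with $\mathtt{flat}(c)$ refining $\alpha$ ($c'$ refines $\alpha$ if $\alpha$ is obtained by summing consecutive entries of $c'$). A polynomial is quasisymmetric if the coefficients of $x_{i_1}^{e_1}\cdots x_{i_k}^{e_k}$ and $x_{j_1}^{e_1}\cdots x_{j_k}^{e_k}$ agree for all $i_1<\dots<i_k$, $j_1<\dots<j_k$. *)

(* Defs.v *)
From mathcomp Require Import all_boot all_order all_algebra.
Set Implicit Arguments. Unset Strict Implicit. Unset Printing Implicit Defensive.
Import GRing.Theory.
Local Open Scope ring_scope.

(* Weak compositions are [seq nat]; positions are 0-based below (paper: 1-based).
   A weak komposition of length N is a pair (e, col) with e : seq nat the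
   entries and col : seq bool the colours (true = red).  Only positive entries
   carry a colour; zero entries are represented with colour false (black),
   so each komposition has a unique representation. *)

Definition flat (w : seq nat) : seq nat := [seq x <- w | x != 0%N].

(* 0-based positions of the nonzero entries of w (paper: n_j = this + 1) *)
Definition nzpos (w : seq nat) : seq nat :=
  [seq k <- iota 0 (size w) | nth 0%N w k != 0%N].

Definition kompo (N : nat) (e : seq nat) (col : seq bool) : bool :=
  [&& size e == N, size col == N &
      [forall k : 'I_N, nth false col k ==> (nth 0%N e k != 0%N)]].

Definition ex (col : seq bool) : nat := count id col.

Definition blocksum (e : seq nat) (lo hi : nat) : nat :=
  (\sum_(lo <= k < hi) nth 0%N e k)%N.
Definition blockred (col : seq bool) (lo hi : nat) : nat :=
  (\sum_(lo <= k < hi) nat_of_bool (nth false col k))%N.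

Definition first_nz_black (e : seq nat) (col : seq bool) (lo hi : nat) : bool :=
  [forall k : 'I_(size e),
     [&& (lo <= k < hi)%N, nth 0%N e k != 0%N &
         [forall k' : 'I_(size e), (lo <= k' < k)%N ==> (nth 0%N e k' == 0%N)]]
     ==> ~~ nth false col k].

(* (e,col) is a glide of a'.  The sequence 0 = i_0 < ... < i_l is encoded by
   a finite function i : 'I_(l+1) -> 'I_(N+1); block j (paper j+1) consists of
   0-based positions i_j <= k < i_(j+1). *)
Definition glide (a' e : seq nat) (col : seq bool) : bool :=
  let N := size a' in
  let l := size (flat a') in
  [exists i : {ffun 'I_l.+1 -> 'I_N.+1},
    let I := fun j : nat => nat_of_ord (i (inord j)) in
    [&& I 0%N == 0%N,
        [forall j : 'I_l, (I j < I j.+1)%N],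
        [forall j : 'I_l, (I j.+1 <= (nth 0%N (nzpos a') j).+1)%N],
        [forall k : 'I_N, (I l <= k)%N ==> (nth 0%N e k == 0%N)] &
        [forall j : 'I_l,
           (blocksum e (I j) (I j.+1) == nth 0%N (flat a') j + blockred col (I j) (I j.+1))%N
           && first_nz_black e col (I j) (I j.+1)]]].

Definition is_unsplit (a' e : seq nat) (col : seq bool) : bool :=
  let N := size a' in
  ((\sum_(k < N) nat_of_bool ((nth 0%N e k != 0%N) && ~~ nth false col k))%N
      == size (flat a'))
  && [forall k : 'I_N, forall k' : 'I_N,
        ((k < k')%N && (nth 0%N e k != 0%N)) ==> (nth 0%N e k' != 0%N)].

(* coefficient of x^e in the glide polynomial  calG^(beta)_{a'}(x_1..x_N),
   N = size a' : sum of beta^ex(b) over glides b whose underlying weak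
   composition is e (i.e. over admissible colourings of e). *)
Definition calG_coef (R : comNzRingType) (beta : R) (a' : seq nat) (e : seq nat) : R :=
  \sum_(c : (size a').-tuple bool | kompo (size a') e c && glide a' e c)
     beta ^+ ex c.

(* coefficient of x^e in the quasisymmetric glide G^(beta)_a(x_1..x_n) *)
Definition G_coef (R : comNzRingType) (beta : R) (a : seq nat) (n : nat) (e : seq nat) : R :=
  if (size a <= n)%N then calG_coef beta (nseq (n - size a) 0%N ++ a) e else 0.

(* c' refines alpha: alpha is obtained by summing (nonempty) consecutive
   blocks of c'; the block sizes are given by sh. *)
Definition refines (c' alpha : seq nat) : bool :=
  [exists sh : (size alpha).-tuple 'I_(size c').+1,
     let s := map (@nat_of_ord _) sh in
     [&& all (fun k => 0 < k)%N s, sumn s == size c' &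
         map sumn (reshape s c') == alpha]].

(* coefficient of x^c in F_alpha(x_1..x_n) *)
Definition F_coef (R : comNzRingType) (alpha : seq nat) (n : nat) (c : seq nat) : R :=
  ((size c == n) && refines (flat c) alpha)%:R.

(* exponent vector (length n) of x_{idx_1}^{es_1} ... x_{idx_k}^{es_k}, 0-based idx *)
Definition monomial (n : nat) (idx es : seq nat) : seq nat :=
  [seq (if k \in idx then nth 0%N es (index k idx) else 0%N) | k <- iota 0 n].

Definition quasisymmetric (R : comNzRingType) (n : nat) (f : seq nat -> R) : Prop :=
  forall (idx idx' es : seq nat),
    size idx = size es -> size idx' = size es ->
    all (fun e => 0 < e)%N es ->
    sorted ltn idx -> sorted ltn idx' ->
    all (fun k => k < n)%N idx -> all (fun k => k < n)%N idx' ->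
    f (monomial n idx es) = f (monomial n idx' es).

(* Main.v *)
Require Import Defs.
From mathcomp Require Import all_boot all_order all_algebra.
From mathcomp Require Import zify.
Set Implicit Arguments. Unset Strict Implicit. Unset Printing Implicit Defensive.

Notation cell := (nat * bool)%type.
Definition vals (w : seq cell) := map fst w.
Definition cols (w : seq cell) := map snd w.
Definition pos (w : seq cell) := all (fun x => 0 < x.1) w.
Definition dd (y : cell) := y.1 - y.2.

Definition segok (x : nat) (p : seq cell) :=
  [&& p != [::], ~~ (head (0,true) p).2 & sumn (vals p) == x + count snd p].

Fixpoint cutr (r : nat) (w : seq cell) : nat :=
  match w with [::] => 0
  | y :: w' => if (r == 0) && ~~ y.2 then 0 else (cutr (r - dd y) w').+1 end.

Fixpoint SEG (a : seq nat) (w : seq cell) : bool :=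
  match a with [::] => w == [::]
  | x :: a' => segok x (take (cutr x w) w) && SEG a' (drop (cutr x w) w) end.

Definition hblack (q : seq cell) := (q == [::]) || ~~ (head (0,true) q).2.

Lemma sum_dd p : pos p -> sumn (map dd p) + count snd p = sumn (vals p).
Proof.
elim: p => //= [[y b] p IH] /andP[/= y0 /IH <-]; rewrite /dd /=; case: b => /=; lia.
Qed.

Lemma cut_cat p q r : pos p -> sumn (map dd p) = r -> hblack q -> cutr r (p ++ q) = size p.
Proof.
elim: p r => [|[y b] p IH] r /=.
  move=> _ <-; case: q => //= [[y b] q]; rewrite /hblack /= => ->; done.
move=> /andP[/= y0 pp] <- hq; rewrite /dd /=.
have -> : (y - b + sumn [seq dd i | i <- p] == 0) && ~~ b = false.
  by case: b => /=; [rewrite andbF | rewrite subn0; case: y y0].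
by rewrite (IH _ pp _ hq) // addKn.
Qed.

Lemma pos_cat p q : pos (p ++ q) = pos p && pos q.
Proof. by rewrite /pos all_cat. Qed.

Lemma segok_dd x p : pos p -> segok x p -> sumn (map dd p) = x.
Proof.
move=> pp /and3P[_ _ /eqP]; rewrite -(sum_dd pp); lia.
Qed.

Lemma SEG_cons x a p q : pos p -> segok x p -> hblack q ->
  SEG (x :: a) (p ++ q) = SEG a q.
Proof.
move=> pp sp hq /=; rewrite (cut_cat pp (segok_dd pp sp) hq) take_size_cat //.
by rewrite drop_size_cat // sp.
Qed.

Lemma SEG_hblack a w : SEG a w -> hblack w.
Proof.
case: a => [/eqP -> //|x a /= /andP[/and3P[ne hb _] _]].
move: ne hb; rewrite /hblack; case: w => //= y w'.
by case: ifP.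
Qed.

Lemma SEG_split x a w : SEG (x :: a) w ->
  exists p q, [/\ w = p ++ q, segok x p & SEG a q].
Proof.
move=> /= /andP[s1 s2]; exists (take (cutr x w) w), (drop (cutr x w) w).
by rewrite cat_take_drop.
Qed.

Lemma SEG_size a w : SEG a w -> size a <= size w.
Proof.
elim: a w => //= x a IH w /andP[/and3P[ne _ _] /IH].
rewrite size_drop; move: ne; case: (cutr x w) => [|m]; first by rewrite take0.
move=> ne; have : 0 < size (take m.+1 w) by case: (take _ _) ne.
rewrite size_take; case: ifP => h; lia.
Qed.

Lemma SEG_sum a w : pos w -> SEG a w -> sumn (vals w) = sumn a + count snd w.
Proof.
elim: a w => [|x a IH] w; first by move=> _ /eqP->.
move=> pw /SEG_split[p [q [E sp sq]]]; subst w; move: pw; rewrite pos_cat => /andP[pp pq].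
move: sp => /and3P[_ _ /eqP e]; rewrite /vals map_cat sumn_cat count_cat -/(vals p) e.
rewrite -/(vals q) (IH _ pq sq) /=; lia.
Qed.

Lemma SEG_black a w : SEG a w -> size a <= count (fun y => ~~ y.2) w.
Proof.
elim: a w => [|x a IH] w //; case/SEG_split=> p [q [-> sp sq]].
rewrite count_cat /=; move: sp => /and3P[]; case: p => //= [[y b] p] _ /= -> _.
by have := IH _ sq; lia.
Qed.

Lemma vals_zip (s : seq nat) (t : seq bool) : size s <= size t -> vals (zip s t) = s.
Proof. exact: unzip1_zip. Qed.
Lemma cols_zip (s : seq nat) (t : seq bool) : size t <= size s -> cols (zip s t) = t.
Proof. exact: unzip2_zip. Qed.
Lemma vals_cat p q : vals (p ++ q) = vals p ++ vals q. Proof. exact: map_cat. Qed.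
Lemma cols_cat p q : cols (p ++ q) = cols p ++ cols q. Proof. exact: map_cat. Qed.

Fixpoint glue (w : seq cell) : seq cell :=
  match w with [::] => [::]
  | x :: s => match glue s with
     | y :: r => if y.2 then x :: y :: r else (x.1 + y.1, x.2) :: r
     | [::] => [:: x] end end.

Lemma glue_cons x s : glue (x :: s) = match glue s with
     | y :: r => if y.2 then x :: y :: r else (x.1 + y.1, x.2) :: r
     | [::] => [:: x] end.
Proof. by []. Qed.

Lemma glue_nil s : (glue s == [::]) = (s == [::]).
Proof. by case: s => //= x s; case: (glue s) => // y r; case: ifP. Qed.

Lemma glue_head x s : exists y r, glue (x :: s) = (y, x.2) :: r.
Proof. rewrite /=; case: (glue s) => [|z r]; first by exists x.1, [::]; case: x.
by case: ifP => _; [exists x.1, (z :: r); case: x | exists (x.1 + z.1), r]. Qed.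

Lemma glue_hb s : hblack (glue s) = hblack s.
Proof.
case: s => // x s; have [y [r ->]] := glue_head x s. by rewrite /hblack.
Qed.

Lemma glue_sum s : sumn (vals (glue s)) = sumn (vals s).
Proof.
elim: s => //= x s; case: (glue s) => [|z r] /=; first by move <-.
by case: ifP => _ /= <-; lia.
Qed.

Lemma glue_count s : count snd (glue s) = count snd s.
Proof.
elim: s => //= x s; case: (glue s) => [|z r] /=; first by move <-.
by case: ifP => /= h <-; rewrite ?h /=; lia.
Qed.

Lemma glue_tail s : all snd (behead (glue s)).
Proof.
elim: s => //= x s; case: (glue s) => [|z r] //=.
by case: ifP => //= ->.
Qed.

Lemma glue_pos s : pos s -> pos (glue s).
Proof.
elim: s => //= x s IH /andP[x0 /IH]; case: (glue s) => [|z r] /=; first by rewrite x0.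
by case: ifP => _ /=; rewrite ?x0 //; case/andP=> /= z0 ->; rewrite andbT; lia.
Qed.

Lemma glue_size s : size (glue s) <= size s.
Proof.
elim: s => //= x s; case: (glue s) => [|z r] //=; by case: ifP => _ /=; lia.
Qed.

Lemma glue_cat_red p q : q != [::] -> (head (0,false) q).2 -> glue (p ++ q) = glue p ++ glue q.
Proof.
move=> qn qr; elim: p => [|x p IH] //; rewrite cat_cons [glue (x :: _)]/= IH.
case: p IH => [|y p] IH.
  case: q qn qr IH => // z q _ zr _; have [y' [r E]] := glue_head z q.
  by rewrite cat0s E /= -E; move: zr => /= ->.

have [y' [r E]] := glue_head y p.
by rewrite E [glue (x :: y :: p)]glue_cons E; case: (y.2).
Qed.

Definition colg (g : seq nat) (b : bool) : seq cell := zip g (b :: nseq (size g).-1 false).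

Lemma glue_colg g b : g != [::] -> glue (colg g b) = [:: (sumn g, b)].
Proof.
case: g => // x g _; rewrite /colg /=.
elim: g x b => [|y g IH] x b /=; first by rewrite addn0.
by rewrite IH /=; congr [:: (_,_)]; lia.
Qed.

Fixpoint cg (gs : seq (seq nat)) (v : seq cell) : seq cell :=
  match gs, v with g :: gs', y :: v' => colg g y.2 ++ cg gs' v' | _, _ => [::] end.

Definition goodg (gs : seq (seq nat)) := all (fun g => (g != [::]) && all (fun x => 0 < x) g) gs.

Lemma cg_cat gs1 gs2 v1 v2 : size gs1 = size v1 -> cg (gs1 ++ gs2) (v1 ++ v2) = cg gs1 v1 ++ cg gs2 v2.
Proof. elim: gs1 v1 => [|g gs IH] [|y v] //= [/IH ->]; by rewrite catA. Qed.

Lemma vals_colg g b : vals (colg g b) = g.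
Proof. by rewrite /colg vals_zip //= size_nseq; case: g. Qed.

Lemma cols_colg g b : g != [::] -> cols (colg g b) = b :: nseq (size g).-1 false.
Proof. by case: g => // x g _; rewrite /colg cols_zip //= size_nseq. Qed.

Lemma vals_cg gs v : size gs = size v -> vals (cg gs v) = flatten gs.
Proof. by elim: gs v => [|g gs IH] [|y v] //= [/IH]; rewrite vals_cat vals_colg => ->. Qed.

Lemma count_cg gs v : goodg gs -> size gs = size v -> count snd (cg gs v) = count snd v.
Proof.
elim: gs v => [|g gs IH] [|y v] //= /andP[/andP[gn _] gg] [/(IH _ gg) <-].
rewrite count_cat; congr (_ + _); rewrite -(count_map snd id) -/(cols _) cols_colg //=.
by rewrite count_nseq mul0n addn0.
Qed.

Lemma pos_cg gs v : goodg gs -> pos (cg gs v).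
Proof.
elim: gs v => [|g gs IH] [|y v] //= /andP[/andP[gn gp] gg].
by rewrite pos_cat IH // andbT /pos -(all_map fst (fun x => 0 < x)) -/(vals _) vals_colg.
Qed.

Lemma glue_cg gs v : goodg gs -> size gs = size v -> all snd (behead v) -> glue (cg gs v) = zip (map sumn gs) (cols v).
Proof.
elim: gs v => [|g gs IH] [|y v] //= /andP[/andP[gn _] gg] [sz] vr.
case: gs gg sz IH => [|g' gs] gg sz IH.
  by case: v sz vr => //= _ _; rewrite cats0 glue_colg.
case: v sz vr => //= y' v [sz] /andP[y'r vr].
rewrite glue_cat_red ?glue_colg //=.
- by rewrite -[colg g' _ ++ _]/(cg (g'::gs) (y'::v)) IH //= ?sz // y'r.
- by clear IH; move: gg => /andP[/andP[]]; case: g'.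
- by clear IH; move: gg => /andP[/andP[]]; case: g'.
Qed.

Fixpoint spl_r (r : nat) (c : seq nat) (v : seq cell) : seq bool :=
  match c with [::] => [::]
  | x :: c' => if r == 0 then
       match v with y :: v' => y.2 :: spl_r (y.1 - x) c' v' | [::] => false :: spl_r 0 c' [::] end
     else false :: spl_r (r - x) c' v end.

Lemma spl_nseq g c v : all (fun x => 0 < x) g -> spl_r (sumn g) (g ++ c) v = nseq (size g) false ++ spl_r 0 c v.
Proof.
elim: g => //= x g IH /andP[x0 gp].
have -> : (x + sumn g == 0) = false by lia.
by rewrite addKn IH.
Qed.

Lemma colg_cons x g b : g != [::] -> colg (x :: g) b = (x, b) :: colg g false.
Proof. by case: g. Qed.

Definition gsok gs v w := [/\ goodg gs, size gs = size v, map sumn gs = vals v & cg gs v = w].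

Lemma spl_cg gs v c v' : goodg gs -> map sumn gs = vals v ->
  spl_r 0 (flatten gs ++ c) (v ++ v') = cols (cg gs v) ++ spl_r 0 c v'.
Proof.
elim: gs v => [|g gs IH] [|y v] //= /andP[/andP[gn gp] gg] [sg sv].
case: g gn gp sg => // x g _ /= /andP[x0 gp] sg.
rewrite -sg addKn -catA spl_nseq // IH // cols_cat cols_zip ?size_nseq // catA.
by [].
Qed.

Lemma glue_groups p : pos p -> exists gs, gsok gs (glue p) p.
Proof.
elim: p => [|x s IH] /=; first by exists [::].
case/andP=> x0 /IH [gs [gg sz sm ce]].
case E: (glue s) sz sm ce => [|y r] sz sm ce.
  move: (glue_nil s); rewrite E eqxx => /esym/eqP ->.
  by exists [:: [:: x.1]]; split => //=; rewrite ?x0 ?addn0 //; case: x {x0}.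
case: ifP => yr.
  exists ([:: x.1] :: gs); split => //=; rewrite ?x0 ?addn0 ?sz ?sm ?ce //.
  by case: x {x0}.
case: gs gg sz sm ce => // g gs /andP[/andP[gn gp] gg] [sz] [sg sm] ce.
exists ((x.1 :: g) :: gs); split => //=; rewrite ?x0 ?gn ?gp ?sz ?sm ?sg //.
rewrite -ce /= yr /colg; case: g gn {gp sg ce} => // z g _; case: x {x0}. by [].
Qed.

Lemma hblack_cg gs v : goodg gs -> size gs = size v -> hblack (cg gs v) = hblack v.
Proof.
case: gs v => [|g gs] [|y v] //= /andP[/andP[gn _] _] _.
by case: g gn.
Qed.

Lemma head_cg gs v : goodg gs -> size gs = size v -> (head (0,true) (cg gs v)).2 = (head (0,true) v).2.
Proof.
case: gs v => [|g gs] [|y v] //= /andP[/andP[gn _] _] _.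
by case: g gn.
Qed.

Lemma sumn_flatten (gs : seq (seq nat)) : sumn (flatten gs) = sumn (map sumn gs).
Proof. by elim: gs => //= g gs <-; rewrite sumn_cat. Qed.

Lemma cg_pos_ne gs v : goodg gs -> size gs = size v -> (cg gs v == [::]) = (v == [::]).
Proof.
case: gs v => [|g gs] [|y v] //= /andP[/andP[gn _] _] _.
by case: g gn.
Qed.

Fixpoint merge (a : seq nat) (w : seq cell) : seq cell :=
  match a with [::] => [::]
  | x :: a' => glue (take (cutr x w) w) ++ merge a' (drop (cutr x w) w) end.

Lemma merge_cons x a p q : pos p -> segok x p -> hblack q ->
  merge (x :: a) (p ++ q) = glue p ++ merge a q.
Proof.
move=> pp sp hq /=; rewrite (cut_cat pp (segok_dd pp sp) hq) take_size_cat //.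
by rewrite drop_size_cat.
Qed.

Lemma count_black_glue p : p != [::] -> ~~ (head (0,true) p).2 ->
  count (fun y => ~~ y.2) (glue p) = 1.
Proof.
case: p => // x s _ xb; have [y [r E]] := glue_head x s.
have := glue_tail (x :: s); rewrite E => rr; rewrite /= xb /=.
have -> // : count (fun y => ~~ y.2) r = 0.
by apply/eqP; rewrite eqn0Ngt -has_count; apply/hasPn => z /(allP rr) ->.
Qed.

Lemma merge_ok a w : pos w -> SEG a w ->
  [/\ SEG a (merge a w), count (fun y => ~~ y.2) (merge a w) = size a,
      pos (merge a w), size (merge a w) <= size w & exists gs, gsok gs (merge a w) w].
Proof.
elim: a w => [|x a IH] w pw; first by move/eqP ->; split => //; exists [::].
case/SEG_split=> p [q [E sp sq]]; subst w.
move: pw; rewrite pos_cat => /andP[pp pq].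
have [Sm Cm Pm Zm [gq [gqg gqs gqm gqc]]] := IH _ pq sq.
rewrite merge_cons //; last exact: SEG_hblack sq.
have [gp [gpg gps gpm gpc]] := glue_groups pp.
move: (sp) => /and3P[pn pb /eqP psum].
have gn : glue p != [::] by rewrite glue_nil.
have gb : ~~ (head (0,true) (glue p)).2.
  by case: p pn pb {sp psum gpc gps gpm gn pp} => // y p _ yb; have [? [? ->]] := glue_head y p.
split.
- rewrite SEG_cons ?glue_pos //; last exact: SEG_hblack Sm.
  by rewrite /segok gn gb glue_sum glue_count psum eqxx.
- by rewrite count_cat count_black_glue // Cm.
- by rewrite pos_cat glue_pos.
- by rewrite size_cat size_cat; have := glue_size p; lia.
exists (gp ++ gq); split.
- by rewrite /goodg all_cat; apply/andP.
- by rewrite !size_cat gps gqs.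
- by rewrite map_cat gpm gqm vals_cat.
- by rewrite cg_cat // gpc gqc.
Qed.

Lemma black1_tail q : ~~ (head (0,true) q).2 -> count (fun y => ~~ y.2) q = 1 -> all snd (behead q).
Proof.
case: q => //= y q -> /= /eqP; rewrite eqSS eqn0Ngt -has_count => /hasPn h.
by apply/allP => z /h; rewrite negbK.
Qed.

Lemma unsplit_ok a v gs : goodg gs -> size gs = size v -> map sumn gs = vals v ->
  SEG a v -> count (fun y => ~~ y.2) v = size a ->
  SEG a (cg gs v) /\ merge a (cg gs v) = v.
Proof.
elim: a v gs => [|x a IH] v gs gg sz sm.
  by move=> /eqP -> _; case: gs sz {gg sm}.
case/SEG_split=> q [v' [E sq sv']]; subst v.
rewrite count_cat => cnt.
move: (sq) => /and3P[qn qb /eqP qsum].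
have c1 : count (fun y => ~~ y.2) q >= 1.
  by case: (q) qn qb => //= y q0 _ ->.
have c2 := SEG_black sv'.
have cq : count (fun y => ~~ y.2) q = 1 by move: cnt => /=; lia.
have cv' : count (fun y => ~~ y.2) v' = size a by move: cnt => /=; lia.
have tq := black1_tail qb cq.
have szq : size q <= size gs by rewrite sz size_cat; lia.
have s1 : size (take (size q) gs) = size q by rewrite size_takel.
have s2 : size (drop (size q) gs) = size v' by rewrite size_drop sz size_cat; lia.
rewrite -(cat_take_drop (size q) gs) in gg sm *.
move: gg; rewrite /goodg all_cat -/(goodg _) -/(goodg _) => /andP[g1 g2].
move: sm; rewrite map_cat vals_cat => /eqP; rewrite eqseq_cat ?size_map ?s1 // => /andP[/eqP m1 /eqP m2].
have [S' M'] := IH _ _ g2 s2 m2 sv' cv'.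
have pq : pos (cg (take (size q) gs) q) by apply: pos_cg.
have sg : segok x (cg (take (size q) gs) q).
  apply/and3P; split.
  - by rewrite cg_pos_ne // qn.
  - by rewrite head_cg.
  - rewrite count_cg // -qsum; apply/eqP.
    rewrite vals_cg // -/(vals q) -m1.
    by rewrite sumn_flatten.
have hb : hblack (cg (drop (size q) gs) v') by rewrite hblack_cg //; exact: SEG_hblack sv'.
rewrite (@cg_cat (take (size q) gs) (drop (size q) gs) q v' s1); split; first by rewrite SEG_cons.
rewrite merge_cons // M' glue_cg // m1.
by rewrite zip_unzip.
Qed.

Definition nzc (s : seq cell) := [seq y <- s | y.1 != 0].
Definition slice (s : seq cell) lo hi := take (hi - lo) (drop lo s).
Definition blk x s lo hi := segok x (nzc (slice s lo hi)).

Definition GP (a : seq nat) (s : seq cell) (cs : seq nat) :=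
  [/\ size cs = (size a).+1, nth 0 cs 0 = 0,
    forall j, j < size a -> [/\ nth 0 cs j < nth 0 cs j.+1,
        nth 0 cs j.+1 <= size s - size a + j.+1 & blk (nth 0 a j) s (nth 0 cs j) (nth 0 cs j.+1)]
  & forall k, nth 0 cs (size a) <= k < size s -> (nth (0,false) s k).1 = 0].

Lemma pos_nzc s : pos (nzc s).
Proof. by apply/allP => y; rewrite mem_filter lt0n => /andP[]. Qed.

Lemma nzc_cat s t : nzc (s ++ t) = nzc s ++ nzc t.
Proof. exact: filter_cat. Qed.

Lemma nzc_nil s : (forall k, k < size s -> (nth (0,false) s k).1 = 0) -> nzc s = [::].
Proof.
move=> h; apply/eqP; rewrite -[_ == _]negbK -has_filter; apply/hasPn => y /(nthP (0,false)) [k kl <-].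
by rewrite h.
Qed.

Lemma nzc_nil_inv s k : nzc s = [::] -> (nth (0,false) s k).1 = 0.
Proof.
move=> h; case: (ltnP k (size s)) => ks; last by rewrite nth_default.
apply/eqP/negPn/negP => nz; have : nth (0,false) s k \in nzc s by rewrite mem_filter nz mem_nth.
by rewrite h.
Qed.

Lemma cs_mono cs L : (forall j, j < L -> nth 0 cs j < nth 0 cs j.+1) ->
  forall i j, i <= j <= L -> nth 0 cs i <= nth 0 cs j.
Proof.
move=> h i j /andP[ij jL]; elim: j ij jL => [|j IH]; first by rewrite leqn0 => /eqP->.
rewrite leq_eqVlt => /orP[/eqP -> //|ij] jL.
by apply: leq_trans (IH ij (ltnW jL)) (ltnW (h _ jL)).
Qed.

Lemma slice_drop s m lo hi : slice s (m + lo) (m + hi) = slice (drop m s) lo hi.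
Proof. by rewrite /slice drop_drop subnDl addnC. Qed.

Lemma nth_bmap cs m j : j < (size cs).-1 -> nth 0 [seq y - m | y <- behead cs] j = nth 0 cs j.+1 - m.
Proof. by move=> h; rewrite (nth_map 0) ?size_behead // nth_behead. Qed.

Lemma GP_SEG a s cs : all (fun x => 0 < x) a -> size a <= size s -> GP a s cs -> SEG a (nzc s).
Proof.
elim: a s cs => [|x a IH] s cs ap sz [c1 c2 c3 c4].
  by rewrite nzc_nil //= => k ks; apply: c4; rewrite ks andbT; move: c2 => ->.
set m := nth 0 cs 1.
have [m0 mb b0] := c3 0 erefl.
have mono := cs_mono (fun j h => let: And3 p _ _ := c3 j h in p).
move: ap => /andP[x0 ap].
have ms : m <= size s - size a by move: mb sz => /=; lia.
have mj : forall j, 1 <= j <= size (x :: a) -> m <= nth 0 cs j by move=> j h; apply: mono; lia.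
have GPr : GP a (drop m s) [seq y - m | y <- behead cs].
  split.
  - by rewrite size_map size_behead c1.
  - by rewrite nth_bmap ?c1 // subnn.
  - move=> j ja; have [h1 h2 h3] := c3 j.+1 ja.
    have mj1 := mj j.+1; have mj2 := mj j.+2.
    rewrite !nth_bmap ?c1 //=; try lia.
    split.
    + by move: h1 mj1 mj2 => /=; lia.
    + by move: h2 mj1 mj2 sz ja => /=; rewrite size_drop; lia.
    + move: h3; rewrite /blk -(slice_drop s m) /=.
      by rewrite !subnKC //; [apply: mj2 | apply: mj1]; apply/andP; split => //=; lia.
  - move=> k; rewrite nth_bmap ?c1 // size_drop => /andP[k1 k2].
    rewrite nth_drop; apply: c4; move: k1 k2.
    have := mj (size (x :: a)); move: sz => /=; lia.
have S' : SEG a (nzc (drop m s)) by apply: (IH _ _ ap _ GPr); rewrite size_drop; move: ms sz => /=; lia.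
rewrite -(cat_take_drop m s) nzc_cat SEG_cons ?pos_nzc //; last exact: SEG_hblack S'.
by move: b0; rewrite /blk /slice c2 drop0 subn0.
Qed.

Lemma split_nzc s p q : nzc s = p ++ q ->
  exists m, [/\ m <= size s, nzc (take m s) = p & nzc (drop m s) = q].
Proof.
elim: s p => [|y s IH] p /=.
  by case: p => // /esym/eqP; rewrite cat0s => /eqP ->; exists 0.
case: ifP => yz.
  case: p => [|y' p] /=.
    by move=> E; exists 0; rewrite take0 drop0 /= yz E.
  case=> <- /IH [m [ms e1 e2]]; exists m.+1; split => //=.
  by rewrite yz e1.
by move/IH => [m [ms e1 e2]]; exists m.+1; split => //=; rewrite yz.
Qed.

Lemma size_nzc s : size (nzc s) <= size s.
Proof. by rewrite size_filter count_size. Qed.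

Lemma SEG_GP a s : all (fun x => 0 < x) a -> SEG a (nzc s) -> exists cs, GP a s cs.
Proof.
elim: a s => [|x a IH] s.
  move=> _ /eqP h; exists [:: 0]; split => // k _ /=.
  exact: nzc_nil_inv h.
move=> /andP[x0 ap] /SEG_split [p [q [E sp sq]]].
have [m [ms e1 e2]] := split_nzc E.
have m0 : 0 < m by rewrite lt0n; apply/negP => /eqP m0; move: sp; rewrite -e1 m0 take0.
have szq : size a <= size (drop m s) by rewrite -e2 in sq; apply: leq_trans (SEG_size sq) (size_nzc _).
rewrite -e2 in sq; have [cs [c1 c2 c3 c4]] := IH _ ap sq.
rewrite size_drop in szq.
exists (0 :: [seq y + m | y <- cs]); split.
- by rewrite /= size_map c1.
- by [].
- move=> [|j] /= ja.
  + rewrite (nth_map 0) ?c1 // c2 add0n; split => //; first by lia.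
    by rewrite /blk /slice drop0 subn0 e1.
  + rewrite !(nth_map 0) ?c1; try lia.
    have [h1 h2 h3] := c3 j ja.
    split; first by lia.
    * by move: h2; rewrite size_drop; lia.
    * by move: h3; rewrite /blk -(slice_drop s m) ![m + _]addnC.
- move=> k; rewrite /= (nth_map 0) ?c1 // => /andP[k1 k2].
  have := c4 (k - m); rewrite nth_drop subnKC; last lia.
  by apply; rewrite size_drop; lia.
Qed.

Definition kok (s : seq cell) := all (fun y => y.2 ==> (y.1 != 0)) s.

Lemma sum_slice (X : Type) (x0 : X) (F : X -> nat) (t : seq X) lo hi : lo <= hi <= size t ->
  \sum_(lo <= k < hi) F (nth x0 t k) = sumn (map F (take (hi - lo) (drop lo t))).
Proof.
move=> /andP[]; elim: hi => [|hi IH].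
  by rewrite leqn0 => /eqP -> _; rewrite big_geq // subnn take0.
rewrite leq_eqVlt => /orP[/eqP <- _|lh hs]; first by rewrite big_geq // subnn take0.
rewrite big_nat_recr //= IH //; last by lia.
rewrite subSn // (take_nth x0); last by rewrite size_drop; lia.
by rewrite -cats1 map_cat sumn_cat /= addn0 nth_drop subnKC.
Qed.

Lemma nth_vals s k : nth 0 (vals s) k = (nth (0,false) s k).1.
Proof. by case: (ltnP k (size s)) => h; [rewrite (nth_map (0,false)) | rewrite !nth_default ?size_map]. Qed.

Lemma nth_cols s k : nth false (cols s) k = (nth (0,false) s k).2.
Proof. by case: (ltnP k (size s)) => h; [rewrite (nth_map (0,false)) | rewrite !nth_default ?size_map]. Qed.

Lemma sumn_nzc t : sumn (vals (nzc t)) = sumn (vals t).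
Proof. by elim: t => //= y t IH; case: ifP => /= [_|/negbFE/eqP ->]; rewrite IH. Qed.

Lemma count_nzc t : kok t -> count snd (nzc t) = count snd t.
Proof.
elim: t => //= y t IH /andP[h /IH]; case: ifP => /= [_ -> //|/negbFE/eqP y0].
by move: h; rewrite y0 /=; case: y.2.
Qed.

Lemma blocksumE s lo hi : lo <= hi <= size s ->
  blocksum (vals s) lo hi = sumn (vals (nzc (slice s lo hi))).
Proof.
move=> h; rewrite /blocksum (sum_slice 0 id); last by rewrite size_map.
by rewrite map_id sumn_nzc /slice /vals map_take map_drop.
Qed.

Lemma sumn_bool (t : seq bool) : sumn (map nat_of_bool t) = count id t.
Proof. by elim: t => //= b t ->. Qed.

Lemma blockredE s lo hi : kok s -> lo <= hi <= size s ->
  blockred (cols s) lo hi = count snd (nzc (slice s lo hi)).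
Proof.
move=> k h; rewrite /blockred (sum_slice false nat_of_bool); last by rewrite size_map.
rewrite count_nzc; last by apply/allP => y /mem_take /mem_drop; apply: (allP k).
by rewrite sumn_bool /slice /cols -map_drop -map_take count_map.
Qed.

Lemma head_filter (T : Type) (p : pred T) x0 t : has p t -> head x0 (filter p t) = nth x0 t (find p t).
Proof. by elim: t => //= y t IH; case: ifP => //= _ /IH. Qed.

Lemma nth_slice s lo hi i : i < hi - lo -> nth (0,false) (slice s lo hi) i = nth (0,false) s (lo + i).
Proof. by move=> h; rewrite /slice nth_take // nth_drop. Qed.

Lemma size_slice s lo hi : lo <= hi <= size s -> size (slice s lo hi) = hi - lo.
Proof. by move=> h; rewrite /slice size_take size_drop; case: ltnP; lia. Qed.

Lemma fnbE s lo hi : lo <= hi <= size s -> nzc (slice s lo hi) != [::] ->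
  first_nz_black (vals s) (cols s) lo hi = ~~ (head (0,true) (nzc (slice s lo hi))).2.
Proof.
move=> h ne.
set sl := slice s lo hi.
have hs : has (fun y => y.1 != 0) sl by rewrite has_filter.
set f := find (fun y => y.1 != 0) sl.
have fs : f < size sl by rewrite -has_find.
have ssl := size_slice h; rewrite -/sl in ssl.
have k0s : lo + f < size (vals s) by rewrite size_map; lia.
rewrite head_filter // (set_nth_default (0,false)) // nth_slice -?ssl //.
have nzf : (nth (0,false) s (lo + f)).1 != 0.
  rewrite -(@nth_slice s lo hi) -?ssl // -/sl (set_nth_default (0,true)) //. exact: (nth_find (0,true) hs).
have bef : forall k, lo <= k < lo + f -> (nth (0,false) s k).1 = 0.
  move=> k /andP[k1 k2]; have := @before_find _ (0,false) (fun y => y.1 != 0) sl (k - lo).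
  rewrite -/f nth_slice; last lia.
  by rewrite subnKC // => /(_ _)/negbFE/eqP; apply; lia.
apply/idP/idP.
  move/forallP => /(_ (Ordinal k0s)) /= /implyP; rewrite nth_cols; apply.
  rewrite nth_vals nzf leq_addr /=; apply/andP; split; first by lia.
  by apply/forallP => k'; apply/implyP => kk; rewrite nth_vals bef.
move=> hb; apply/forallP => k; apply/implyP => /and3P[/andP[k1 k2] nz /forallP hk].
rewrite nth_vals in nz.
have e : nat_of_ord k = lo + f.
  case: (ltngtP k (lo + f)) => // kf.
    by rewrite bef ?eqxx in nz; lia.
  by have := hk (Ordinal k0s); rewrite /= nth_vals (negbTE nzf) kf leq_addr.
by rewrite nth_cols e.
Qed.

Lemma blkE x s lo hi : 0 < x -> kok s -> lo <= hi <= size s ->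
  (blocksum (vals s) lo hi == x + blockred (cols s) lo hi) && first_nz_black (vals s) (cols s) lo hi
  = blk x s lo hi.
Proof.
move=> x0 k h; rewrite blocksumE // blockredE // /blk /segok.
case: (boolP (nzc (slice s lo hi) == [::])) => [/eqP E|ne].
  by rewrite E /=; case: x x0.
by rewrite fnbE // /= andbC.
Qed.

Lemma flat_pad k a : all (fun x => 0 < x) a -> flat (nseq k 0 ++ a) = a.
Proof.
move=> ap; rewrite /flat filter_cat.
have -> : [seq x <- nseq k 0 | x != 0] = [::] by elim: k.
by apply/all_filterP; apply: sub_all ap => x; rewrite lt0n.
Qed.

Lemma nzpos_pad k a : all (fun x => 0 < x) a -> nzpos (nseq k 0 ++ a) = iota k (size a).
Proof.
move=> ap; rewrite /nzpos size_cat size_nseq iotaD filter_cat add0n.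
have -> : [seq j <- iota 0 k | nth 0 (nseq k 0 ++ a) j != 0] = [::].
  apply/eqP; rewrite -[_ == _]negbK -has_filter; apply/hasPn => j.
  by rewrite mem_iota add0n => /andP[_ jk]; rewrite nth_cat size_nseq jk nth_nseq jk eqxx.
apply/all_filterP/allP => j; rewrite mem_iota => /andP[j1 j2].
rewrite nth_cat size_nseq ltnNge j1 /= -lt0n.
have h : j - k < size a by lia.
exact: (allP ap _ (mem_nth 0 h)).
Qed.

Lemma glideE a s : all (fun x => 0 < x) a -> size a <= size s -> kok s ->
  glide (nseq (size s - size a) 0 ++ a) (vals s) (cols s) = SEG a (nzc s).
Proof.
move=> ap sz k.
set a' := nseq _ 0 ++ a.
have fa : flat a' = a by exact: flat_pad.
have za : size a' = size s by rewrite size_cat size_nseq; lia.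
have np : forall j, j < size a -> nth 0 (nzpos a') j = size s - size a + j.
  by move=> j ja; rewrite nzpos_pad // nth_iota.
have nthfa : forall j, nth 0 (flat a') j = nth 0 a j by rewrite fa.
have pa : forall j, j < size a -> 0 < nth 0 a j by move=> j ja; apply: (allP ap); apply: mem_nth.
rewrite /glide.
move: (erefl (size (flat a'))); rewrite {2}fa => hl.
apply/idP/idP.
- case/existsP => i /and5P[/eqP h0 /forallP h1 /forallP h2 /forallP h3 /forallP h4].
  set I := fun j => nat_of_ord (i (inord j)).
  apply: (@GP_SEG _ _ [seq I j | j <- iota 0 (size a).+1]) => //.
  have nI : forall j, j <= size a -> nth 0 [seq I j | j <- iota 0 (size a).+1] j = I j.
    by move=> j jl; rewrite (nth_map 0) ?size_iota // nth_iota.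
  have IN : forall j, nat_of_ord (i (inord j)) <= size s by move=> j; rewrite -za -ltnS; exact: ltn_ord.
  split.
  + by rewrite size_map size_iota.
  + by rewrite nI.
  + move=> j ja; rewrite !nI //; last lia.
    have jl : j < size (flat a') by rewrite hl.
    have := h1 (Ordinal jl); have := h2 (Ordinal jl); have := h4 (Ordinal jl).
    rewrite /= nthfa np //.
    move=> hb lt le; rewrite /I; split => //; first by rewrite addnS.
    by rewrite -blkE ?pa // (ltnW le) IN.
  + move=> kk; rewrite nI // => /andP[k1 k2].
    have kN : kk < size a' by rewrite za.
    move: k1; rewrite /I -{1}hl => k1.
    by have := h3 (Ordinal kN); rewrite /= k1 /= nth_vals => /eqP.
- move/(SEG_GP ap) => [cs [c1 c2 c3 c4]].
  have csN : forall j, nth 0 cs j <= size s.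
    move=> [|j]; first by rewrite c2.
    case: (ltnP j (size a)) => ja; first by have [_ h _] := c3 j ja; lia.
    by rewrite nth_default // c1.
  apply/existsP; exists [ffun j : 'I_(size (flat a')).+1 => (inord (nth 0 cs j) : 'I_(size a').+1)].
  have Iv : forall j, j <= size (flat a') ->
      nat_of_ord ([ffun j : 'I_(size (flat a')).+1 => (inord (nth 0 cs j) : 'I_(size a').+1)] (inord j : 'I_(size (flat a')).+1)) = nth 0 cs j.
    by move=> j jl; rewrite ffunE inordK // inordK // za ltnS.
  apply/and5P; split.
  + by rewrite Iv // c2.
  + apply/forallP => j; rewrite !Iv //; last exact: ltnW.
    by have [] := c3 j; rewrite -hl.
  + apply/forallP => j; rewrite !Iv // np -?hl //.
    by have [] := c3 j; rewrite -hl // => _ h _; lia.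
  + apply/forallP => kk; rewrite Iv // hl; apply/implyP => k1.
    by rewrite nth_vals c4 // k1 -za /=.
  + apply/forallP => j; rewrite !Iv //; last exact: ltnW.
    have ja : j < size a by rewrite -hl.
    rewrite nthfa blkE ?pa //; first by have [] := c3 j.
    have [h1 _ _] := c3 j ja; rewrite csN andbT; lia.
Qed.

Lemma kompoE N s : kompo N (vals s) (cols s) = (size s == N) && kok s.
Proof.
rewrite /kompo !size_map andbA andbb; case: eqP => //= <-.
apply/forallP/allP => [h y /(nthP (0,false)) [k ks <-]|h k].
  by have := h (Ordinal ks); rewrite /= nth_cols nth_vals.
by rewrite nth_cols nth_vals; apply: h; apply: mem_nth.
Qed.

Lemma sum_count (P : pred cell) s : \sum_(k < size s) nat_of_bool (P (nth (0,false) s k)) = count P s.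
Proof.
rewrite -(big_mkord xpredT (fun k => nat_of_bool (P (nth (0,false) s k)))).
rewrite (sum_slice (0,false) (fun y => nat_of_bool (P y))) ?leqnn // subn0 drop0 take_size.
by elim: s => //= y s ->.
Qed.

Lemma ltn_take (T : Type) i z (t : seq T) : i < size (take z t) -> i < z /\ i < size t.
Proof. rewrite size_take; case: (ltnP z (size t)) => h1 h2; split; lia. Qed.

Lemma sub_lt (j N m : nat) : j < N -> N - m <= j -> j - (N - m) < m.
Proof. lia. Qed.

Definition ZL (s : seq cell) := [forall k : 'I_(size s), forall k' : 'I_(size s),
        ((k < k') && ((nth (0,false) s k).1 != 0)) ==> ((nth (0,false) s k').1 != 0)].

Lemma unsplitE a' s : size a' = size s ->
  is_unsplit a' (vals s) (cols s) =
  (count (fun y => ~~ y.2) (nzc s) == size (flat a')) && ZL s.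
Proof.
move=> za; rewrite /is_unsplit za.
congr (_ && _).
  rewrite (eq_bigr (fun k : 'I_(size s) => nat_of_bool ((fun y => (y.1 != 0) && ~~ y.2) (nth (0,false) s k)))).
    by rewrite (sum_count (fun y => (y.1 != 0) && ~~ y.2)) count_filter; congr (_ == _); apply: eq_count => y /=; rewrite andbC.
  by move=> k _; rewrite nth_vals nth_cols.
by apply: eq_forallb => k; apply: eq_forallb => k'; rewrite !nth_vals.
Qed.

Definition zpad n (v : seq cell) := nseq (n - size v) (0,false) ++ v.

Lemma ZLE s : kok s -> ZL s = (s == zpad (size s) (nzc s)).
Proof.
move=> k; apply/idP/eqP => [/forallP h|E].
  set z := find (fun y => y.1 != 0) s.
  have hz1 : z < size s -> (nth (0,false) s z).1 != 0.
    by move=> zs; apply: (nth_find (0,false) (a := fun y => y.1 != 0)); rewrite has_find.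
  have hz2 : forall i, i < z -> (nth (0,false) s i).1 == 0.
    by move=> i iz; apply/negbFE; apply: (before_find (0,false) iz).
  clearbody z.
  have dz : all (fun y => y.1 != 0) (drop z s).
    apply/allP => y /(nthP (0,false)) [i]; rewrite size_drop nth_drop => iz <-.
    case: (ltnP z (size s)) => zs; last by move: iz; rewrite (eqP (_ : size s - z == 0)) // subn_eq0.
    case: i iz => [|i] iz; first by rewrite addn0 hz1.
    have zi : z + i.+1 < size s by rewrite -ltn_subRL.
    have := h (Ordinal zs); move/forallP => /(_ (Ordinal zi)).
    by rewrite /= hz1 // andbT addnS ltnS leq_addr.
  have tz : all (fun y => y == (0,false)) (take z s).
    apply/allP => y /(nthP (0,false)) [i] /ltn_take [iz' isz] <-.
    rewrite nth_take //; have := hz2 _ iz'.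
    have : nth (0,false) s i \in s by apply: mem_nth.
    move/(allP k); case: (nth _ s i) => x b /= hb /eqP x0.
    by move: hb; rewrite x0; case: b.
  have nz : nzc s = drop z s.
    rewrite -{1}(cat_take_drop z s) nzc_cat (_ : nzc (take z s) = [::]).
      by apply/all_filterP.
    apply/eqP; rewrite -[_ == _]negbK -has_filter; apply/hasPn => y /(allP tz) /eqP -> //.
  rewrite /zpad nz size_drop (_ : size s - (size s - z) = size (take z s)).
    by rewrite -{1}(cat_take_drop z s); congr (_ ++ _); apply/all_pred1P.
  by rewrite size_take; case: ltnP; lia.
apply/forallP => i; apply/forallP => j; apply/implyP => /andP[ij].
have E' := fun k => congr1 (fun t => nth (0,false) t k) E; rewrite /= in E'.
rewrite !E' /zpad !nth_cat size_nseq.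
case: ltnP => ii; first by rewrite nth_nseq ii.
rewrite ltnNge (leq_trans ii (ltnW ij)) /= => _.
have : nth (0,false) (nzc s) (j - (size s - size (nzc s))) \in nzc s.
  by apply: mem_nth; apply: sub_lt (ltn_ord j) (leq_trans ii (ltnW ij)).
by rewrite mem_filter => /andP[].
Qed.

Lemma refinesE c al : refines c al <->
  exists gs : seq (seq nat), [/\ all (fun g => g != [::]) gs, flatten gs = c & map sumn gs = al].
Proof.
split.
  case/existsP => sh /and3P[sp /eqP ss /eqP sm].
  exists (reshape (map (@nat_of_ord _) sh) c); split => //.
    have hsh : shape (reshape (map (@nat_of_ord _) sh) c) = map (@nat_of_ord _) sh by apply: reshapeKl; rewrite ss.
    have sp2 := sp; rewrite -hsh /shape all_map in sp2; apply/allP => g gi; have := allP sp2 g gi; by rewrite /= lt0n size_eq0.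
  by rewrite reshapeKr // ss.
case=> gs [gn gf gm].
have sz : size (shape gs) == size al by rewrite size_map -gm size_map.
have le : all (fun k => k < (size c).+1) (shape gs).
  apply/allP => k /mapP [g gi ->]; rewrite ltnS -gf size_flatten.
  elim: gs gi {gn gf gm sz} => //= g' gs IH; rewrite inE => /orP[/eqP ->|/IH]; lia.
have sz2 : size (map (fun k => inord k : 'I_(size c).+1) (shape gs)) == size al by rewrite size_map.
apply/existsP; exists (Tuple sz2) => /=.
have -> : map (@nat_of_ord _) (map (fun k => inord k : 'I_(size c).+1) (shape gs)) = shape gs.
  rewrite -map_comp; rewrite -[RHS]map_id; apply/eq_in_map => k kin /=.
  by rewrite inordK // -ltnS; apply: (allP le).
apply/and3P; split.
- by rewrite /shape all_map; apply/allP => g gi /=; rewrite lt0n size_eq0 (allP gn).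
- by rewrite -size_flatten gf.
- by rewrite -gf flattenK gm.
Qed.

Fixpoint expd (e : seq nat) (g : seq bool) : seq bool :=
  match e with [::] => [::]
  | x :: e' => if x == 0 then false :: expd e' g else head false g :: expd e' (behead g) end.

Lemma size_expd e g : size (expd e g) = size e.
Proof. by elim: e g => //= x e IH g; case: ifP => _ /=; rewrite IH. Qed.

Lemma flat_vals s : flat (vals s) = vals (nzc s).
Proof. by elim: s => //= y s IH; rewrite /flat /= -/(flat _) IH; case: ifP. Qed.

Lemma vals_nzc_zip e col : size e = size col -> vals (nzc (zip e col)) = flat e.
Proof.
move=> h; rewrite -flat_vals vals_zip //; lia.
Qed.

Lemma expd_nzc e col : size e = size col -> kok (zip e col) -> expd e (cols (nzc (zip e col))) = col.
Proof.
elim: e col => [|x e IH] [|b col] //= [sz] /andP[hb k].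
case: eqP => [x0|/eqP x0] /=.
  by move: hb; rewrite x0 /=; case: b => //= _; rewrite IH.
by rewrite IH.
Qed.

Lemma nzc_expd e g : size g = size (flat e) -> nzc (zip e (expd e g)) = zip (flat e) g.
Proof.
elim: e g => [|x e IH] g //=; first by case: g.
rewrite /flat /=; case: eqP => [x0|/eqP x0] /=.
  by rewrite x0 eqxx /= => /IH.
case: g => //= b g [/IH ->]; by rewrite x0.
Qed.

Lemma kok_expd e g : kok (zip e (expd e g)).
Proof.
by elim: e g => //= x e IH g; case: eqP => [x0|/eqP x0] /=; rewrite IH ?andbT //; apply/implyP.
Qed.

Lemma count_expd e g : size g = size (flat e) -> count id (expd e g) = count id g.
Proof.
elim: e g => [|x e IH] g /=; first by case: g.
rewrite /flat /=; case: eqP => [x0|/eqP x0] /=.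
  by move/IH.
by case: g => //= b g [/IH ->].
Qed.


Lemma size_zpad n v : size v <= n -> size (zpad n v) = n.
Proof. by rewrite size_cat size_nseq; lia. Qed.

Lemma nzc_zpad n v : pos v -> nzc (zpad n v) = v.
Proof.
move=> pv; rewrite /zpad nzc_cat (_ : nzc (nseq _ _) = [::]); last by elim: (n - size v).
by apply/all_filterP; apply: sub_all pv => y; rewrite lt0n.
Qed.

Lemma kok_zpad n v : pos v -> kok (zpad n v).
Proof.
move=> pv; rewrite /kok all_cat; apply/andP; split; first by elim: (n - size v).
by apply: sub_all pv => y /= h; apply/implyP; rewrite -lt0n.
Qed.

Lemma count_zpad n v : count snd (zpad n v) = count snd v.
Proof. by rewrite count_cat; elim: (n - size v). Qed.

Lemma zpad_ZL n v : pos v -> size v <= n -> ZL (zpad n v).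
Proof.
move=> pv sv; rewrite ZLE ?kok_zpad // nzc_zpad // size_zpad //.
Qed.

Lemma flat_pos e : all (fun x => 0 < x) (flat e).
Proof. by apply/allP => x; rewrite mem_filter lt0n => /andP[]. Qed.

Lemma goodg_of gs : all (fun g => g != [::]) gs -> all (fun x => 0 < x) (flatten gs) -> goodg gs.
Proof.
elim: gs => //= g gs IH /andP[gn gsn]; rewrite all_cat => /andP[gp gsp].
by rewrite gn gp IH.
Qed.

Lemma goodg_ne gs : goodg gs -> all (fun g => g != [::]) gs.
Proof. by apply: sub_all => g /andP[]. Qed.

Definition st S n (t : n.-tuple ('I_S.+1 * bool)) : seq cell := [seq (nat_of_ord p.1, p.2) | p <- t].

Lemma size_st S n (t : n.-tuple ('I_S.+1 * bool)) : size (st t) = n.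
Proof. by rewrite size_map size_tuple. Qed.

Lemma vals_st S n (t : n.-tuple ('I_S.+1 * bool)) : map (fun p => nat_of_ord p.1) t = vals (st t).
Proof. by rewrite /vals -map_comp. Qed.

Lemma cols_st S n (t : n.-tuple ('I_S.+1 * bool)) : map snd t = cols (st t).
Proof. by rewrite /cols -map_comp. Qed.

Lemma glideE' n a s : all (fun x => 0 < x) a -> size a <= n -> kok s -> size s = n ->
  glide (nseq (n - size a) 0 ++ a) (vals s) (cols s) = SEG a (nzc s).
Proof. by move=> ap an k E; subst n; apply: glideE. Qed.

Definition PR a S n (t : n.-tuple ('I_S.+1 * bool)) :=
  let b := map (fun p => nat_of_ord p.1) t in
  let col := map snd t in
  let a' := nseq (n - size a) 0%N ++ a in
  [&& kompo n b col, glide a' b col & is_unsplit a' b col].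

Lemma PR_E a S n (t : n.-tuple ('I_S.+1 * bool)) : all (fun x => 0 < x) a -> size a <= n ->
  PR a t = [&& kok (st t), SEG a (nzc (st t)), count (fun y => ~~ y.2) (nzc (st t)) == size a
             & st t == zpad n (nzc (st t))].
Proof.
move=> ap an; rewrite /PR /= vals_st cols_st kompoE size_st eqxx /=.
case: (boolP (kok (st t))) => //= k.
rewrite glideE' ?size_st //.
rewrite unsplitE; last by rewrite size_cat size_nseq size_st; lia.
by rewrite flat_pad // ZLE // size_st.
Qed.

Definition PL a n e (col : n.-tuple bool) :=
  kompo n e col && glide (nseq (n - size a) 0 ++ a) e col.

Lemma PL_E a n e (col : n.-tuple bool) : all (fun x => 0 < x) a -> size a <= n -> size e = n ->
  PL a e col = kok (zip e col) && SEG a (nzc (zip e col)).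
Proof.
move=> ap an se; rewrite /PL.
have sz : size e = size col by rewrite size_tuple.
have e1 : vals (zip e col) = e by rewrite vals_zip // sz.
have e2 : cols (zip e col) = col by rewrite cols_zip // sz.
have e3 : n = size (zip e col) by rewrite size_zip -sz minnn.
have -> : kompo n e col = kompo n (vals (zip e col)) (cols (zip e col)) by rewrite e1 e2.
have -> : glide (nseq (n - size a) 0 ++ a) e col =
  glide (nseq (n - size a) 0 ++ a) (vals (zip e col)) (cols (zip e col)) by rewrite e1 e2.
rewrite kompoE -e3 eqxx /=.
case: (boolP (kok _)) => //= k.
by rewrite glideE' // -e3.
Qed.

Section Bij.
Variables (a : seq nat) (n : nat) (e : seq nat).
Hypotheses (ap : all (fun x => 0 < x) a) (an : size a <= n) (se : size e = n).
Let S := sumn a + n.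

Definition hmap (t : n.-tuple ('I_S.+1 * bool)) : n.-tuple bool :=
  insubd (nseq_tuple n false) (expd e (spl_r 0 (flat e) (nzc (st t)))).

Definition hmap' (col : n.-tuple bool) : n.-tuple ('I_S.+1 * bool) :=
  insubd (nseq_tuple n (ord0, false))
    (map (fun y => (inord y.1, y.2)) (zpad n (merge a (nzc (zip e col))))).

Lemma val_hmap t : val (hmap t) = expd e (spl_r 0 (flat e) (nzc (st t))).
Proof. by rewrite /hmap val_insubd size_expd se eqxx. Qed.

Lemma bound_vals (w : seq cell) : (forall y, y \in w -> y.1 <= S) ->
  st (insubd (nseq_tuple n (ord0, false)) (map (fun y => (inord y.1, y.2) : 'I_S.+1 * bool) w)
      : n.-tuple _) = if size w == n then w else nseq n (0,false).
Proof.
move=> hb; rewrite /st val_insubd size_map; case: eqP => _.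
  rewrite -map_comp -[RHS]map_id; apply/eq_in_map => y yi /=.
  by rewrite inordK ?ltnS ?hb //; case: y yi.
by rewrite map_nseq.
Qed.

Lemma size_merge w : SEG a w -> pos w -> size (merge a w) <= size w.
Proof. by move=> sw pw; have [] := merge_ok pw sw. Qed.

Lemma st_hmap' (col : n.-tuple bool) : SEG a (nzc (zip e col)) ->
  st (hmap' col) = zpad n (merge a (nzc (zip e col))).
Proof.
move=> sw; have pw := pos_nzc (zip e col).
have [Sm Cm Pm Zm [gs [gg gsz gsm gsc]]] := merge_ok pw sw.
have szw : size (nzc (zip e col)) <= n.
  by apply: leq_trans (size_nzc _) _; rewrite size_zip se size_tuple minnn.
rewrite /hmap' bound_vals; first by case: eqP => //; rewrite size_zpad //; exact: leq_trans Zm szw.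
move=> y; rewrite mem_cat => /orP[/nseqP [-> _] //|ym].
have : y.1 <= sumn (vals (merge a (nzc (zip e col)))).
  move: ym; elim: (merge _ _) => //= z m IH; rewrite inE => /orP[/eqP ->|/IH]; lia.
have sm : sumn (vals (merge a (nzc (zip e col)))) = sumn (vals (nzc (zip e col))).
  by rewrite -{2}gsc vals_cg // sumn_flatten gsm.
have := SEG_sum pw sw; have := count_size snd (nzc (zip e col)).
rewrite /S => c1 c2 c3; apply: (leq_trans c3); rewrite sm c2 leq_add2l; exact: leq_trans c1 szw.
Qed.

Lemma st_inj : injective (@st S n).
Proof.
move=> t1 t2 h; apply: val_inj; apply: (inj_map _ h) => [[x1 b1] [x2 b2]] /= [/val_inj -> ->].
by [].
Qed.

Lemma spl_flat gs v : goodg gs -> map sumn gs = vals v -> spl_r 0 (flatten gs) v = cols (cg gs v).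
Proof. by move=> gg gm; have := spl_cg [::] [::] gg gm; rewrite !cats0. Qed.

Lemma F1 (col : n.-tuple bool) : PL a e col -> hmap (hmap' col) = col.
Proof.
rewrite PL_E // => /andP[k sw].
have pw := pos_nzc (zip e col).
have [Sm Cm Pm Zm [gs [gg gsz gsm gsc]]] := merge_ok pw sw.
apply: val_inj; rewrite val_hmap st_hmap' // nzc_zpad //.
have sz : size e = size col by rewrite se size_tuple.
rewrite -(vals_nzc_zip sz) -{1}gsc vals_cg // spl_flat // gsc.
by rewrite expd_nzc.
Qed.

Lemma F3 (col : n.-tuple bool) : PL a e col ->
  PR a (hmap' col) && refines (flat e) (flat (map (fun p => nat_of_ord p.1) (hmap' col))).
Proof.
move=> pl; move: (pl); rewrite PL_E // => /andP[k sw].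
have pw := pos_nzc (zip e col).
have [Sm Cm Pm Zm [gs [gg gsz gsm gsc]]] := merge_ok pw sw.
have sz : size e = size col by rewrite se size_tuple.
rewrite PR_E // st_hmap' // nzc_zpad // kok_zpad // Sm Cm eqxx eqxx /=.
rewrite vals_st st_hmap' // flat_vals nzc_zpad //.
apply/refinesE; exists gs; split => //; first exact: goodg_ne.
by rewrite -(vals_nzc_zip sz) -gsc vals_cg.
Qed.

Lemma PR_facts (t : n.-tuple ('I_S.+1 * bool)) :
  PR a t && refines (flat e) (flat (map (fun p => nat_of_ord p.1) t)) ->
  exists gs, [/\ goodg gs, size gs = size (nzc (st t)), map sumn gs = vals (nzc (st t)),
     flatten gs = flat e & val (hmap t) = expd e (cols (cg gs (nzc (st t))))] /\
     [/\ kok (st t), SEG a (nzc (st t)), count (fun y => ~~ y.2) (nzc (st t)) = size a &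
         st t = zpad n (nzc (st t))].
Proof.
rewrite PR_E // => /andP[/and4P[k sv /eqP cb /eqP zs]].
rewrite vals_st flat_vals => /refinesE [gs [gn gf gm]].
have gg : goodg gs by apply: goodg_of; rewrite // gf flat_pos.
have gsz : size gs = size (nzc (st t)) by rewrite -(size_map sumn) gm size_map.
exists gs; split => //; split => //.
by rewrite val_hmap -gf spl_flat.
Qed.

Lemma F2 (t : n.-tuple ('I_S.+1 * bool)) :
  PR a t && refines (flat e) (flat (map (fun p => nat_of_ord p.1) t)) ->
  PL a e (hmap t) && (hmap' (hmap t) == t).
Proof.
move/PR_facts => [gs [[gg gsz gm gf vh] [k sv cb zs]]].
have [Su Mu] := unsplit_ok gg gsz gm sv cb.
have ez : size (cols (cg gs (nzc (st t)))) = size (flat e).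
  by rewrite size_map -gf -(vals_cg gsz) size_map.
have nz : nzc (zip e (hmap t)) = cg gs (nzc (st t)).
  by rewrite vh nzc_expd // -gf -(vals_cg gsz) zip_unzip.
have pl : PL a e (hmap t) by rewrite PL_E // nz Su andbT vh kok_expd.
rewrite pl /=; apply/eqP/st_inj.
by rewrite st_hmap' ?nz // Mu -zs.
Qed.

Lemma F4 (t : n.-tuple ('I_S.+1 * bool)) :
  PR a t && refines (flat e) (flat (map (fun p => nat_of_ord p.1) t)) ->
  ex (hmap t) = ex (map snd t).
Proof.
move/PR_facts => [gs [[gg gsz gm gf vh] [k sv cb zs]]].
rewrite /ex vh count_expd; last by rewrite size_map -gf -(vals_cg gsz) size_map.
have -> : count id (cols (cg gs (nzc (st t)))) = count snd (cg gs (nzc (st t))) by rewrite /cols count_map.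
rewrite count_cg // cols_st /cols count_map -(count_zpad n) -zs.
by apply: eq_count.
Qed.
End Bij.

Lemma size_monomial n idx es : size (monomial n idx es) = n.
Proof. by rewrite size_map size_iota. Qed.

Lemma flat_monomial n idx es : size idx = size es -> all (fun e => 0 < e) es ->
  sorted ltn idx -> all (fun k => k < n) idx -> flat (monomial n idx es) = es.
Proof.
move=> sz ep so al.
set f := fun k => if k \in idx then nth 0 es (index k idx) else 0.
have fE : monomial n idx es = map f (iota 0 n) by [].
have fin : forall k, k \in idx -> 0 < f k.
  move=> k ki; rewrite /f ki; apply: (allP ep); apply: mem_nth; rewrite -sz index_mem //.
rewrite /flat fE filter_map.
have -> : [seq k <- iota 0 n | preim f (fun x => x != 0) k] = idx.
  apply: (@irr_sorted_eq _ ltn ltn_trans ltnn) => //.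
  - apply: (sorted_filter ltn_trans); exact: iota_ltn_sorted.
  - move=> k; rewrite mem_filter mem_iota /= add0n.
    case ki: (k \in idx); first by rewrite -lt0n fin // (allP al).
    by rewrite /f ki eqxx.
have uq : uniq idx by apply: (sorted_uniq ltn_trans ltnn).
apply: (@eq_from_nth _ 0); first by rewrite size_map.
move=> i; rewrite size_map => ii.
rewrite (nth_map 0) // /f mem_nth // index_uniq //.
Qed.

Import GRing.Theory.
Local Open Scope ring_scope.

Lemma part1 (R : comNzRingType) (beta : R) (a : seq nat) (n : nat) :
  all (fun x => 0 < x)%N a -> (size a <= n)%N -> forall e : seq nat,
  G_coef beta a n e =
  \sum_(t : n.-tuple ('I_(sumn a + n).+1 * bool) | PR a t)
     beta ^+ ex (map snd t) * F_coef R (flat (map (fun p => nat_of_ord p.1) t)) n e.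
Proof.
move=> ap an e; rewrite /G_coef an /calG_coef.
set a' := nseq (n - size a) 0%N ++ a.
have za : size a' = n by rewrite size_cat size_nseq subnK.
suff : forall N (HN : N = n), \sum_(c : N.-tuple bool | kompo N e c && glide a' e c) beta ^+ ex c =
  \sum_(t : n.-tuple ('I_(sumn a + n).+1 * bool) | PR a t)
     beta ^+ ex (map snd t) * F_coef R (flat (map (fun p => nat_of_ord p.1) t)) n e.
  by apply.
move=> N ->.
case: (eqVneq (size e) n) => se; last first.
  rewrite big_pred0; last by move=> c; rewrite /kompo (negbTE se).
  by rewrite big1 // => t _; rewrite /F_coef (negbTE se) /= mulr0.
rewrite (eq_bigr (fun t : n.-tuple ('I_(sumn a + n).+1 * bool) => if refines (flat e) (flat (map (fun p => nat_of_ord p.1) t))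
                           then beta ^+ ex (map snd t) else 0)); last first.
  by move=> t _; rewrite /F_coef se eqxx /=; case: refines; rewrite ?mulr1 ?mulr0.
rewrite -big_mkcondr.
rewrite (reindex_onto (@hmap a n e) (@hmap' a n e)); last by move=> c; apply: F1.
apply: eq_big => t.
  apply/idP/idP; last exact: F2.
  by case/andP => pl /eqP E; have := F3 ap an se pl; rewrite E.
case/andP => pl /eqP E; have := F3 ap an se pl; rewrite E => H.
by rewrite (F4 ap an se H).
Qed.


Theorem mainTheorem7 (R : comNzRingType) (beta : R) (a : seq nat) (n : nat) :
  all (fun x => 0 < x)%N a -> (size a <= n)%N ->
  (forall e : seq nat,
     G_coef beta a n e =
     \sum_(t : n.-tuple ('I_(sumn a + n).+1 * bool) |
             let b := map (fun p => nat_of_ord p.1) t in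
             let col := map snd t in
             let a' := nseq (n - size a) 0%N ++ a in
             [&& kompo n b col, glide a' b col & is_unsplit a' b col])
        beta ^+ ex (map snd t) *
        F_coef R (flat (map (fun p => nat_of_ord p.1) t)) n e)
  /\ quasisymmetric n (G_coef beta a n).
Proof.
move=> ap an; split; first exact: (part1 beta ap an).
move=> idx idx' es s1 s2 esp so1 so2 al1 al2.
rewrite !(part1 beta ap an); apply: eq_bigr => t _; congr (_ * _).
by rewrite /F_coef !size_monomial !flat_monomial.
Qed.
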